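(* Let $\mathcal{G}=\langle G_1,\dots,G_L\rangle$ be a non-strict temporal graph with vertex set $V$ in which every layer consists of exactly two components and no two consecutive layers have the same partition. If for some $i$ with $2\le i\le L-1$ the transition from step $i-1$ to step $i$ is free and the transition from step $i$ to step $i+1$ is restricted, then for every $s\in V$ there is a non-strict exploration schedule starting at $s$.
   Context: A non-strict temporal graph $\mathcal{G}=\langle G_1,\dots,G_L\rangle$ with vertex set $V$ is a sequence of partitions $G_t$ of $V$ into components. A non-strict temporal walk starting at $v$ at time $t_1$ is a sequence of components $C_{t_1},\dots,C_{t_l}$ with $t_{j+1}=t_j+1$, $C_{t_j}\in G_{t_j}$, $C_{t_j}\cap C_{t_{j+1}}\neq\emptyset$, $v\in C_{t_1}$, $t_l\le L$; it visits $\bigcup_j C_{t_j}$. A non-strict exploration schedule starting at $s$ is such a walk starting at $s$ at time $1$ that visits all of $V$. For $G_i=\{A_i,B_i\}$, $G_{i+1}=\{A_{i+1},B_{i+1}\}$, the transition from step $i$ to $i+1$ is free if $A_i\cap A_{i+1}$, $A_i\cap B_{i+1}$, $B_i\cap A_{i+1}$, $B_i\cap B_{i+1}$ are all non-empty, and restricted if exactly one of them is empty. *)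

(* Defs.v *)
From mathcomp Require Import all_boot.
Set Implicit Arguments. Unset Strict Implicit. Unset Printing Implicit Defensive.

(* Indices outside 1..L are ignored. *)
Definition temporal_graph (V : finType) (G : nat -> {set {set V}}) (L : nat) : Prop :=
  forall t, 1 <= t <= L -> partition (G t) [set: V].

Definition two_component_layers (V : finType) (G : nat -> {set {set V}}) (L : nat) : Prop :=
  forall t, 1 <= t <= L -> #|G t| = 2.

Definition no_repeated_layers (V : finType) (G : nat -> {set {set V}}) (L : nat) : Prop :=
  forall t, 1 <= t < L -> G t != G t.+1.

Definition free_transition (V : finType) (G : nat -> {set {set V}}) (i : nat) : Prop :=
  forall C D, C \in G i -> D \in G i.+1 -> C :&: D != set0.

Definition restricted_transition (V : finType) (G : nat -> {set {set V}}) (i : nat) : Prop :=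
  #|[set CD in setX (G i) (G i.+1) | CD.1 :&: CD.2 == set0]| = 1.

(* A non-strict temporal walk starting at s at time 1, given as the list of
   components cs = [C_1; ...; C_l] (C_j is the (j+1)-th entry, a component of G j),
   with l >= 1, l <= L, consecutive components intersecting, s in C_1. *)
Definition temporal_walk_from_1 (V : finType) (G : nat -> {set {set V}}) (L : nat)
    (s : V) (cs : seq {set V}) : Prop :=
  [/\ 0 < size cs, size cs <= L,
      (forall j, j < size cs -> nth set0 cs j \in G j.+1),
      (forall j, j.+1 < size cs -> nth set0 cs j :&: nth set0 cs j.+1 != set0)
    & s \in nth set0 cs 0].

Definition visited (V : finType) (cs : seq {set V}) : {set V} :=
  \bigcup_(C <- cs) C.

Definition exploration_schedule (V : finType) (G : nat -> {set {set V}}) (L : nat)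
    (s : V) (cs : seq {set V}) : Prop :=
  temporal_walk_from_1 G L s cs /\ visited cs = [set: V].

(* Main.v *)
Require Import Defs.
From mathcomp Require Import all_boot zify.

Lemma other_block (V : finType) (P : {set {set V}}) (C : {set V}) :
  partition P [set: V] -> #|P| = 2 -> C \in P ->
  exists D, [/\ D \in P, D != C & C :|: D = [set: V]].
Proof.
move=> /and3P[/eqP hcov _ _] /eqP/cards2P[a [b [hab hP]]] hC.
have key: forall x : V, x \in a :|: b.
  move=> x; have: x \in cover P by rewrite hcov inE.
  case/bigcupP=> B; rewrite hP !inE => /orP[]/eqP-> hx; by rewrite hx ?orbT.
move: hC; rewrite hP !inE => /orP[]/eqP->.
- exists b; split; first by rewrite !inE eqxx orbT.
    by rewrite eq_sym.
  by apply/setP=> x; rewrite key inE.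
- exists a; split; first by rewrite !inE eqxx.
    by [].
  by apply/setP=> x; rewrite setUC key inE.
Qed.

Theorem lemma4 (V : finType) (G : nat -> {set {set V}}) (L : nat)
  (HG : temporal_graph G L)
  (H2 : two_component_layers G L)
  (Hneq : no_repeated_layers G L)
  (i : nat) (Hi : 2 <= i <= L.-1)
  (Hfree : free_transition G i.-1)
  (Hrestr : restricted_transition G i) :
  forall s : V, exists cs : seq {set V}, exploration_schedule G L s cs.
Proof.
move=> s.
case/andP: Hi => Hi2 HiL.
have HiL' : i.+1 <= L by lia.
have Hpi : (i.-1).+1 = i by rewrite prednK // ltnW.
move: Hrestr; rewrite /restricted_transition => /eqP/cards1P[[C E] hS].
have: (C, E) \in [set CD in setX (G i) (G i.+1) | CD.1 :&: CD.2 == set0].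
  by rewrite hS inE.
rewrite !inE /= => /andP[/andP[hC hE] /eqP hCE].
have pi : partition (G i) [set: V] by apply: HG; apply/andP; split; lia.
have pi1 : partition (G i.+1) [set: V] by apply: HG; apply/andP; split; lia.
have c1 : #|G i| = 2 by apply: H2; apply/andP; split; lia.
have [D [hD hDC hCD]] := @other_block _ _ _ pi c1 hC.
have c2 : #|G i.+1| = 2 by apply: H2; apply/andP; split; lia.
have [F [hF hFE hEF]] := @other_block _ _ _ pi1 c2 hE.
have hCF : C \subset F.
  apply/subsetP=> x xC.
  have: x \in E :|: F by rewrite hEF inE.
  rewrite inE => /orP[xE|//].
  have: x \in C :&: E by rewrite inE xC xE.
  by rewrite hCE inE.
have hDF : D :|: F = [set: V].
  apply/setP=> x; rewrite inE.
  have: x \in C :|: D by rewrite hCD inE.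
  rewrite !inE => /orP[xC|->//].
  by rewrite (subsetP hCF) ?orbT.
have hDFn : D :&: F != set0.
  apply/negP=> /eqP h.
  have: (D, F) \in [set CD in setX (G i) (G i.+1) | CD.1 :&: CD.2 == set0].
    by rewrite !inE /= hD hF h eqxx.
  rewrite hS inE => /eqP [] hh _.
  by rewrite hh eqxx in hDC.
have cov : forall t, 1 <= t <= L -> s \in pblock (G t) s.
  move=> t ht; have /and3P[/eqP hcov _ _] := HG t ht.
  by rewrite mem_pblock hcov inE.
have pmem : forall t, 1 <= t <= L -> pblock (G t) s \in G t.
  move=> t ht; have /and3P[/eqP hcov _ _] := HG t ht.
  by apply: pblock_mem; rewrite hcov inE.
exists (mkseq (fun t => pblock (G t.+1) s) i.-1 ++ [:: D; F]).
split; last first.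
  apply/setP=> x; rewrite /visited big_cat /= !big_cons big_nil !inE.
  have: x \in D :|: F by rewrite hDF inE.
  by rewrite inE => /orP[->|->]; rewrite ?orbT.
have hsz : size (mkseq (fun t => pblock (G t.+1) s) i.-1 ++ [:: D; F]) = i.+1.
  by rewrite size_cat size_mkseq /= -Hpi addn2.
split.
- by rewrite hsz.
- by rewrite hsz.
- move=> j; rewrite hsz => hj; rewrite nth_cat size_mkseq.
  case: ltnP => hj1.
    rewrite nth_mkseq //; apply: pmem; lia.
  have : (j - i.-1 = 0) \/ (j - i.-1 = 1) by lia.
  case=> e; rewrite e /=.
    by have -> : j.+1 = i by lia.
  by have -> : j.+1 = i.+1 by lia.
- move=> j; rewrite hsz => hj; rewrite !nth_cat !size_mkseq.
  case: (ltnP j.+1 i.-1) => hj1.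
    rewrite (ltn_trans (ltnSn j) hj1) !nth_mkseq ?(ltn_trans (ltnSn j) hj1) //.
    apply/set0Pn; exists s; rewrite inE !cov //; lia.
  case: (ltnP j i.-1) => hj0.
    have ej : j = i.-2 by lia.
    have -> : j.+1 - i.-1 = 0 by lia.
    rewrite nth_mkseq //= ej.
    have -> : i.-2.+1 = i.-1 by lia.
    by apply: Hfree; [apply: pmem; lia | rewrite Hpi].
  have -> : j - i.-1 = 0 by lia.
  have -> : j.+1 - i.-1 = 1 by lia.
  by [].
- rewrite nth_cat size_mkseq.
  case: (ltnP 0 i.-1) => h0.
    rewrite nth_mkseq //; apply: cov; lia.
  by move: h0 Hi2; case: (i) => [|[|k]].
Qed.
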